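(* Let $m>0$ be a real number and let $\omega=\omega(q)$ be a positive integer-valued function of $q$ such that $\omega(q) \ge \frac{q}{m}\cdot\frac{\log\log q}{\log q}$ for all sufficiently large $q$. Then for all sufficiently large $q$ there exists a $q$-solvable undirected graph which contains no clique of size $\omega(q)$ (i.e. is $K_{\omega(q)}$-free) and has at most $q^{2m+1}$ vertices.
   Context: All graphs are finite. A directed graph $D=(V,E)$ has arcs $E \subseteq \{(u,v)\in V^2 : u \neq v\}$; an undirected graph is identified with the directed graph having both arcs $(u,v)$ and $(v,u)$ for each edge. $N^-(v)=\{u:(u,v)\in E\}$. For $q\ge2$ let $[q]=\{0,\dots,q-1\}$. A $D$-function over $[q]$ is a map $f=(f_v)_{v\in V}:[q]^V\to[q]^V$ with each $f_v(x)$ depending only on $(x_u)_{u\in N^-(v)}$. $D$ is $q$-solvable if some $D$-function $f$ over $[q]$ has the property that for every $x\in[q]^V$ there is $v$ with $f_v(x)=x_v$. Logarithms are natural logarithms. *)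

(* Defs.v *)
From mathcomp Require Import all_boot.
From Stdlib Require Import Reals.
Set Implicit Arguments. Unset Strict Implicit. Unset Printing Implicit Defensive.

(* A directed graph on vertex set 'I_n is given by its arc relation e;
   e u v means (u,v) is an arc, so N^-(v) = [pred u | e u v]. *)

Definition undirected (n : nat) (e : rel 'I_n) : Prop :=
  (forall u v, e u v = e v u) /\ (forall v, e v v = false).

Definition is_D_function (n q : nat) (e : rel 'I_n)
    (f : 'I_n -> ('I_n -> 'I_q) -> 'I_q) : Prop :=
  forall v (x y : 'I_n -> 'I_q),
    (forall u, e u v -> x u = y u) -> f v x = f v y.

Definition q_solvable (n q : nat) (e : rel 'I_n) : Prop :=
  exists f : 'I_n -> ('I_n -> 'I_q) -> 'I_q,
    is_D_function e f /\
    forall x : 'I_n -> 'I_q, exists v : 'I_n, f v x = x v.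

Definition has_clique (n : nat) (e : rel 'I_n) (k : nat) : Prop :=
  exists S : {set 'I_n}, #|S| = k /\
    forall u v, u \in S -> v \in S -> u != v -> e u v.

Definition clique_free (n : nat) (e : rel 'I_n) (k : nat) : Prop :=
  ~ has_clique e k.

(* Main.v *)
Require Import Defs.
From mathcomp Require Import all_boot all_algebra zify.
From Stdlib Require Import FunctionalExtensionality.
Import GRing.Theory.
Set Implicit Arguments. Unset Strict Implicit. Unset Printing Implicit Defensive.

Lemma union_bound (I G : finType) (P : pred I) (S : I -> {set G}) (A : {set G}) :
  (forall g, g \in A -> exists2 i, P i & g \in S i) -> #|A| <= \sum_(i | P i) #|S i|.
Proof.
move=> H.
have -> : #|A| = \sum_(g in A) 1 by rewrite sum1_card.
have -> : \sum_(i | P i) #|S i| = \sum_(i | P i) \sum_(g : G) (g \in S i : nat).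
  apply: eq_bigr => i _; rewrite -sum1_card big_mkcond /=.
  by apply: eq_bigr => g _; case: (g \in S i).
rewrite exchange_big /= [X in _ <= X](bigID (fun g => g \in A)) /=.
apply: leq_trans (leq_addr _ _); apply: leq_sum => g gA.
have [i Pi gi] := H g gA.
rewrite (bigD1 i) //= gi; exact: leq_addr.
Qed.

Section Count.
Variables (a d : nat).
Local Notation X := {ffun 'I_d -> 'I_a}.

Lemma count_h (T : {set X}) (c : 'I_a) :
  #|[set h : {ffun X -> 'I_a} | [forall b in T, h b != c]]| = a.-1 ^ #|T| * a ^ #|~: T|.
Proof.
pose F := fun x : X => if x \in T then predC1 c else predT.
have -> : [set h : {ffun X -> 'I_a} | [forall b in T, h b != c]] = [set h | h \in family F].
  apply/setP => h; rewrite !inE; apply/forall_inP/familyP => H x.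
    rewrite /F; case: ifP => xT; last by [].
    by rewrite inE; apply: H.
  by move=> xT; have := H x; rewrite /F xT inE.
rewrite cardsE card_family foldrE big_map big_enum /=.
rewrite (bigID (fun x => x \in T)) /=.
rewrite (eq_bigr (fun _ => a.-1)); last first.
  by move=> x xT; rewrite /F xT cardC1 card_ord.
rewrite [X in _ * X](eq_bigr (fun _ => a)); last first.
  by move=> x xT; rewrite /F (negbTE xT) card_ord.
rewrite !prod_nat_const; congr (_ * _).
congr (_ ^ _); apply: eq_card => x; rewrite !inE //.
Qed.

End Count.

Lemma leq_expr m n e : m <= n -> m ^ e <= n ^ e.
Proof. move=> h; elim: e => [|e IH]; rewrite ?expn0 // !expnS; exact: leq_mul. Qed.

Lemma ffact_le_exp n k : n ^_ k <= n ^ k.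
Proof.
elim: k n => [|k IH] n; first by rewrite ffactn0 expn0.
rewrite ffactnS expnS leq_mul2l; apply/orP; right.
apply: (leq_trans (IH _)); apply: leq_expr; exact: leq_pred.
Qed.

Lemma binom_le n k : 'C(n, k) <= n ^ k.
Proof.
apply: (leq_trans _ (ffact_le_exp n k)); rewrite -bin_ffact.
by apply: leq_pmulr; rewrite fact_gt0.
Qed.

Lemma arith a d N A C : 1 < a -> d.+1 <= A ->
  a.-1 ^ d.+1 * a ^ 2 <= a ^ d.+1 -> C <= a ^ (d * d.+1) -> d * d.+1 < N ->
  (a ^ A) ^ N <= C * (a * (a.-1 ^ d.+1 * a ^ (A - d.+1))) ^ N -> False.
Proof.
move=> a1 tA hb hC hN H.
set t := d.+1 in tA hb hC hN H *.
set b := a.-1 in hb H.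
have a0 : 0 < a by apply: ltnW.
have H1 : a ^ (t * N) <= C * a ^ N * b ^ (t * N).
  have : (a ^ A) ^ N * a ^ (t * N) <= C * (a * (b ^ t * a ^ (A - t))) ^ N * a ^ (t * N).
    by rewrite leq_mul2r H orbT.
  have -> : C * (a * (b ^ t * a ^ (A - t))) ^ N * a ^ (t * N)
          = (C * a ^ N * b ^ (t * N)) * (a ^ A) ^ N.
    rewrite !expnMn -!expnM.
    rewrite -!mulnA; congr (_ * _); congr (_ * _); congr (_ * _).
    by rewrite -expnD -mulnDl subnK // -expnM mulnC.
  by rewrite [X in _ <= X]mulnC leq_mul2l !expn_eq0 eqn0Ngt a0.
have H2 : a ^ (t * N) * a ^ (2 * N) <= C * a ^ N * a ^ (t * N).
  apply: (leq_trans (leq_mul H1 (leqnn _))).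
  rewrite -!mulnA leq_mul2l; apply/orP; right.
  rewrite leq_mul2l; apply/orP; right.
  rewrite !expnM -expnMn; exact: leq_expr.
have H3 : a ^ (2 * N) <= a ^ (d * t + N).
  have : a ^ (t * N) * a ^ (2 * N) <= a ^ (t * N) * a ^ (d * t + N).
    apply: (leq_trans H2); rewrite [X in _ <= X]mulnC leq_mul2r; apply/orP; right.
    by rewrite expnD leq_mul2r hC orbT.
  by rewrite leq_mul2l expn_eq0 eqn0Ngt a0.
move: H3; rewrite leq_exp2l // => H3.
have : N <= d * t by rewrite -(leq_add2r N); rewrite mul2n -addnn in H3.
by rewrite leqNgt hN.
Qed.

Section Pages.
Variables (a d N : nat).
Local Notation X := {ffun 'I_d -> 'I_a}.

Definition goodp (g : {ffun 'I_N -> {ffun X -> 'I_a}}) :=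
  forall T : {set X}, #|T| = d.+1 -> exists p, forall c, exists2 b, b \in T & g p b = c.

Lemma pages_exist : 1 < a -> d.+1 <= a ^ d -> a.-1 ^ d.+1 * a ^ 2 <= a ^ d.+1 ->
  d * d.+1 < N -> exists g, goodp g.
Proof.
move=> a1 tA hb hN.
pose BT (T : {set X}) := [set h : {ffun X -> 'I_a} | [exists c, [forall b in T, h b != c]]].
pose G (T : {set X}) := [set g : {ffun 'I_N -> {ffun X -> 'I_a}} | g \in ffun_on (BT T)].
case: (boolP [exists g : {ffun 'I_N -> {ffun X -> 'I_a}}, [forall T : {set X}, (#|T| == d.+1) ==>
   [exists p, [forall c, [exists b in T, g p b == c]]]]]).
  case/existsP => g /forallP H; exists g => T hT.
  have := H T; rewrite hT eqxx /= => /existsP [p /forallP Hp]; exists p => c.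
  by have/existsP[b /andP[bT /eqP e]] := Hp c; exists b.
rewrite negb_exists => /forallP Hno; exfalso.
have UB := @union_bound _ _ (fun T : {set X} => #|T| == d.+1) G setT.
have UB' : #|[set: {ffun 'I_N -> {ffun X -> 'I_a}}]| <= \sum_(T : {set X} | #|T| == d.+1) #|G T|.
  apply: UB => g _.
  have := Hno g; rewrite negb_forall => /existsP [T]; rewrite negb_imply => /andP [hT H].
  exists T => //; rewrite inE; apply/ffun_onP => p.
  move: H; rewrite negb_exists => /forallP /(_ p); rewrite negb_forall => /existsP [c].
  rewrite negb_exists_in => /forall_inP Hc.
  by rewrite inE; apply/existsP; exists c; apply/forall_inP => b bT; exact: Hc.
have HG : forall T : {set X}, #|T| == d.+1 ->
    #|G T| <= (a * (a.-1 ^ d.+1 * a ^ (a ^ d - d.+1))) ^ N.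
  move=> T /eqP hT.
  rewrite cardsE card_ffun_on card_ord; apply: leq_expr.
  have := @union_bound _ _ predT (fun c => [set h : {ffun X -> 'I_a} | [forall b in T, h b != c]]) (BT T).
  move=> /(_ _) H; apply: leq_trans (H _) _.
    move=> h; rewrite inE => /existsP [c Hc]; exists c => //; by rewrite inE.
  rewrite (eq_bigr (fun _ => a.-1 ^ d.+1 * a ^ (a ^ d - d.+1))).
    by rewrite sum_nat_const card_ord.
  move=> c _; rewrite count_h hT; congr (_ * _ ^ _).
  by have := cardsC T; rewrite hT card_ffun !card_ord => <-; rewrite addKn.
have UB2 : #|[set: {ffun 'I_N -> {ffun X -> 'I_a}}]| <= \sum_(T : {set X} | #|T| == d.+1) (a * (a.-1 ^ d.+1 * a ^ (a ^ d - d.+1))) ^ N.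
  by apply: leq_trans UB' _; apply: leq_sum.
move: UB2; rewrite sum_nat_const cardsT card_ffun card_ffun !card_ord.
have -> : #|(fun T : {set X} => #|T| == d.+1)| = 'C(a ^ d, d.+1).
  by have := card_draws X d.+1; rewrite card_ffun !card_ord => <-; rewrite cardsE.
rewrite card_ffun !card_ord.
apply: (arith a1 tA hb _ hN).
apply: leq_trans (binom_le _ _) _; by rewrite -expnM.
Qed.
End Pages.

Definition solvC (V C : finType) (e : rel V) :=
  exists f : V -> (V -> C) -> C,
    (forall v (x y : V -> C), (forall u, e u v -> x u = y u) -> f v x = f v y) /\
    (forall x : V -> C, exists v, f v x = x v).

Definition isl (d N : nat) (s : 'I_d + 'I_N) : bool := if s is inl _ then true else false.
Definition bip (d N : nat) : rel ('I_d + 'I_N) := fun u v => isl u != isl v.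

Section Base.
Variables (a d N : nat) (c0 : 'I_a).
Local Notation X := {ffun 'I_d -> 'I_a}.
Variable g : {ffun 'I_N -> {ffun X -> 'I_a}}.
Hypothesis hg : goodp g.

Lemma smallS (x : 'I_d + 'I_N -> 'I_a) :
  #|[set b : X | [forall p, g p b != x (inr p)]]| <= d.
Proof.
set S := [set b : X | _].
rewrite leqNgt; apply/negP => hS.
pose T := [set z in take d.+1 (enum S)].
have hT : #|T| = d.+1.
  have U : uniq (take d.+1 (enum S)) by apply: take_uniq; exact: enum_uniq.
  rewrite cardsE (card_uniqP U) size_take -cardE; case: ifP => // /negbT; rewrite -leqNgt => h; apply/eqP; by rewrite eqn_leq h hS.
have [p hp] := hg hT.
have [b bT hb] := hp (x (inr p)).
have : b \in S by move: bT; rewrite inE => /mem_take; rewrite mem_enum.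
by rewrite inE => /forallP /(_ p); rewrite hb eqxx.
Qed.

Lemma base_solv : @solvC ('I_d + 'I_N)%type 'I_a (@bip d N).
Proof.
pose b0 : X := [ffun _ => c0].
pose F (v : 'I_d + 'I_N) (x : 'I_d + 'I_N -> 'I_a) : 'I_a :=
  match v with
  | inr p => g p [ffun j => x (inl j)]
  | inl j => (nth b0 (enum [set b : X | [forall p, g p b != x (inr p)]]) j) j
  end.
exists F; split.
  move=> [j|p] x y hxy /=.
    have E : [set b : X | [forall p, g p b != x (inr p)]] = [set b : X | [forall p, g p b != y (inr p)]].
      by apply/setP => b; rewrite !inE; apply: eq_forallb => p; rewrite hxy.
    by rewrite E.
  by congr (g p _); apply/ffunP => j; rewrite !ffunE hxy.
move=> x.
pose al : X := [ffun j => x (inl j)].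
case: (boolP [exists p, g p al == x (inr p)]) => [/existsP [p /eqP hp] | hno].
  by exists (inr p).
have alS : al \in [set b : X | [forall p, g p b != x (inr p)]].
  by rewrite inE; move: hno; rewrite negb_exists.
have hi : index al (enum [set b : X | [forall p, g p b != x (inr p)]]) < d.
  apply: leq_trans (smallS x); by rewrite cardE index_mem mem_enum.
exists (inl (Ordinal hi)) => /=.
by rewrite nth_index ?mem_enum // /al ffunE.
Qed.
End Base.

Lemma bern b n : b ^ n * (b + n) <= b.+1 ^ n * b.
Proof.
elim: n => [|n IH]; first by rewrite !expn0 addn0.
rewrite !expnS addnS.
have h1 : b ^ n <= b.+1 ^ n by apply: leq_expr.
move: IH h1; move: (b ^ n) (b.+1 ^ n) => P Q IH h1.
have h2 := leq_mul (leqnn b) IH.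
have h3 := leq_mul (leqnn b) h1.
nia.
Qed.

Lemma params a : 1 < a ->
  (2 * a ^ 2).-1.+1 <= a ^ (2 * a ^ 2).-1 /\
  a.-1 ^ (2 * a ^ 2).-1.+1 * a ^ 2 <= a ^ (2 * a ^ 2).-1.+1.
Proof.
move=> a1.
have tpos : 0 < 2 * a ^ 2 by rewrite muln_gt0 expn_gt0 (ltnW a1).
split; first exact: ltn_expl.
rewrite prednK //.
have ab : a = a.-1.+1 by rewrite prednK // ltnW.
set b := a.-1 in ab *.
have b0 : 0 < b by rewrite /b -subn1 subn_gt0.
have hB : 2 * b ^ a <= a ^ a.
  have := bern b a; rewrite -ab => h.
  have : 2 * b ^ a * b <= a ^ a * b.
    apply: leq_trans h; rewrite -mulnA mulnC -mulnA leq_mul2l; apply/orP; right.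
    by rewrite mulnC mul2n -addnn leq_add2l ab.
  by rewrite leq_mul2r eqn0Ngt b0.
have hA : a ^ 2 <= 2 ^ (2 * a).
  rewrite mulnC expnM; apply: leq_expr; apply: ltnW; exact: ltn_expl.
have -> : 2 * a ^ 2 = a * (2 * a) by rewrite mulnCA -mulnn.
rewrite (expnM b) (expnM a a); apply: (leq_trans (leq_mul (leqnn _) hA)).
rewrite mulnC -expnMn; exact: leq_expr.
Qed.

Section Lex.
Variables (H A : finType) (eH : rel H) (r : nat).
Local Notation R := 'I_r.+1.

Definition lexrel : rel (R * H) := fun x y => (x.1 != y.1) || eH x.2 y.2.

Lemma lex_solv : @solvC H A eH -> @solvC (R * H)%type (R * A)%type lexrel.
Proof.
case=> F [Fdep Fwin].
pose Phi (y : H -> R * A) : R :=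
  if [pick v | F v (fun u => (y u).2) == (y v).2] is Some v then (y v).1 else 0%R.
pose f (iv : R * H) (x : R * H -> R * A) : R * A :=
  ((iv.1 - \sum_(k | k != iv.1) Phi (fun u => x (k, u)))%R,
   F iv.2 (fun u => (x (iv.1, u)).2)).
exists f; split.
  move=> [i v] x y hxy; rewrite /f /=; congr (_, _).
    congr (_ - _)%R; apply: eq_bigr => k hk; congr Phi.
    by apply: functional_extensionality => u; apply: hxy; rewrite /lexrel /= hk.
  apply: Fdep => u huv; by rewrite hxy // /lexrel /= eqxx huv.
move=> x.
pose T := (\sum_k Phi (fun u => x (k, u)))%R.
have [v hv] := Fwin (fun u => (x (T, u)).2).
have [w E hw] : exists2 w, [pick v | F v (fun u => (x (T, u)).2) == (x (T, v)).2] = Some w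
    & F w (fun u => (x (T, u)).2) = (x (T, w)).2.
  case: pickP => [w /eqP hw | hn]; first by exists w.
  by have := hn v; rewrite /= hv eqxx.
exists (T, w); rewrite /f /= hw [RHS]surjective_pairing; congr (_, _).
have hT : T = (Phi (fun u => x (T, u)) + \sum_(k | k != T) Phi (fun u => x (k, u)))%R.
  rewrite {1}/T (bigD1 T) //.
rewrite {1}hT addrK /Phi E //.
Qed.
End Lex.

Lemma solv_colors (V C C' : finType) (e : rel V) (h : C' -> C) (c0 : C') :
  injective h -> @solvC V C e -> @solvC V C' e.
Proof.
move=> hinj [f [fdep fwin]].
exists (fun v x => odflt c0 [pick c | h c == f v (h \o x)]); split.
  move=> v x y hxy /=; rewrite (fdep v (h \o x) (h \o y)) //.
  by move=> u huv /=; rewrite hxy.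
move=> x; have [v hv] := fwin (h \o x); exists v.
case: pickP => [c /eqP hc | hn] /=.
  by apply: hinj; rewrite hc hv.
by have := hn (x v); rewrite /= hv eqxx.
Qed.

Lemma transport (V : finType) (e : rel V) (q : nat) (k : nat) :
  (forall v, e v v = false) -> (forall u v, e u v = e v u) ->
  @solvC V 'I_q e ->
  (forall S : {set V}, (forall u v, u \in S -> v \in S -> u != v -> e u v) -> #|S| < k) ->
  exists (e' : rel 'I_#|V|), undirected e' /\ q_solvable q e' /\ clique_free e' k.
Proof.
move=> irr sym [f [fdep fwin]] hcl.
exists (fun i j => e (enum_val i) (enum_val j)); split; [|split].
- by split => [u v|v]; [rewrite sym | rewrite irr].
- exists (fun i x => f (enum_val i) (fun v => x (enum_rank v))); split.
    move=> i x y hxy; apply: fdep => u hu; apply: hxy; by rewrite enum_rankK.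
  move=> x; have [v hv] := fwin (fun v => x (enum_rank v)).
  by exists (enum_rank v); rewrite enum_rankK hv.
- move=> [S [hS hcS]].
  have := hcl (enum_val @: S).
  rewrite card_imset; last exact: enum_val_inj.
  rewrite hS ltnn => H; suff: false by []; apply: H.
  move=> u v /imsetP [i iS ->] /imsetP [j jS ->] ne.
  apply: hcS => //; by apply: contra ne => /eqP ->.
Qed.

Lemma finite_part (q a r k : nat) : 1 < a -> 0 < q -> q <= r.+1 * a -> 2 * r.+1 < k ->
  exists n (e : rel 'I_n), undirected e /\ q_solvable q e /\ clique_free e k /\
    n = r.+1 * ((2 * a ^ 2).-1 + ((2 * a ^ 2).-1 * (2 * a ^ 2).-1.+1).+1).
Proof.
move=> a1 q0 hq hk.
set d := (2 * a ^ 2).-1.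
set N := (d * d.+1).+1.
have [hA hB] := params a1.
have [g hg] := @pages_exist a d N a1 hA hB (ltnSn _).
have a0 : 0 < a by apply: ltnW.
pose c0 : 'I_a := Ordinal a0.
have Hb := base_solv c0 hg.
have Hl := @lex_solv _ _ _ r Hb.
pose h (c : 'I_q) : 'I_r.+1 * 'I_a := (inord (c %/ a), Ordinal (ltn_pmod c a0)).
have hdiv : forall c : 'I_q, c %/ a < r.+1.
  by move=> c; rewrite ltn_divLR // (leq_trans (ltn_ord c) hq).
have hinj : injective h.
  move=> c1 c2 [e1 e2]; apply: val_inj => /=.
  have e1' : c1 %/ a = c2 %/ a.
    by have := congr1 val e1; rewrite /= !inordK.
  by rewrite (divn_eq c1 a) (divn_eq c2 a) e1' e2.
have Hq := solv_colors (Ordinal q0) hinj Hl.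
have irr : forall v, lexrel (@bip d N) (r := r) v v = false.
  by move=> v; rewrite /lexrel /bip !eqxx.
have sym : forall u v, lexrel (@bip d N) (r := r) u v = lexrel (@bip d N) (r := r) v u.
  by move=> u v; rewrite /lexrel /bip eq_sym; congr (_ || _); rewrite eq_sym.
have cl : forall S : {set ('I_r.+1 * ('I_d + 'I_N))},
    (forall u v, u \in S -> v \in S -> u != v -> lexrel (@bip d N) (r := r) u v) -> #|S| < k.
  move=> S hS.
  pose phi (v : 'I_r.+1 * ('I_d + 'I_N)) := (v.1, isl v.2).
  apply: leq_ltn_trans hk.
  rewrite -(card_in_imset (f := phi)); last first.
    move=> u v uS vS /= huv; apply/eqP; apply/negP => ne.
    have := hS u v uS vS (introN idP ne); rewrite /lexrel.
    by case: huv => e1 e2; rewrite e1 /bip e2 !eqxx.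
  apply: leq_trans (max_card _) _.
  by rewrite card_prod card_bool card_ord mulnC.
have [e' [U [S C]]] := transport irr sym Hq cl.
exists _, e'; split => //; split => //; split => //.
by rewrite card_prod card_sum !card_ord.
Qed.

Unset Implicit Arguments.
From mathcomp Require Import all_boot zify.
From Stdlib Require Import Reals Lra.
Open Scope R_scope.

Lemma lin_exp (x eps : R) : 0 < eps -> x <= exp (eps * x) / eps.
Proof.
move=> he; have := exp_ineq1_le (eps * x).
move=> h; apply (Rmult_le_reg_r eps); first lra.
unfold Rdiv; rewrite Rmult_assoc Rinv_l; lra.
Qed.

Lemma exp_gt_id y : y < exp y.
Proof. have := exp_ineq1_le y; lra. Qed.

Lemma exp4 y : exp (y / 4) ^ 4 = exp y.
Proof.
simpl; rewrite Rmult_1_r -!exp_plus; f_equal; lra.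
Qed.

Lemma key_vertex (m L A : R) : 0 < m -> 0 < L -> 334084 <= m * L ->
  0 <= A <= 4 * m * L + 1 -> 4 * A ^ 4 <= exp (2 * m * L).
Proof.
move=> hm hL hy [hA0 hA].
set y := m * L in hy.
have e1 : y <= 4 * exp (y / 4).
  have := lin_exp y (1/4) ltac:(lra).
  have -> : 1 / 4 * y = y / 4 by lra.
  move=> h; unfold Rdiv in h; rewrite Rinv_div in h; lra.
have e2 : 1 < exp (y / 4).
  have := exp_ineq1_le (y / 4); lra.
have hA2 : A <= 17 * exp (y / 4).
  have : 4 * m * L = 4 * y by rewrite /y; lra.
  lra.
have h3 : A ^ 4 <= (17 * exp (y / 4)) ^ 4.
  apply pow_incr; lra.
rewrite Rpow_mult_distr exp4 in h3.
have -> : 2 * m * L = y + y by rewrite /y; lra.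
rewrite exp_plus.
have := exp_gt_id y.
have := exp_pos y.
nra.
Qed.

Lemma key_clique (m L q A w : R) : 0 < m -> 0 < L -> 4 * m * L < A -> 4 * m * L <= q ->
  1 <= ln L -> 0 < q -> w >= (q / m) * (ln L / L) -> 2 * (q / A + 1) < w.
Proof.
move=> hm hL hA hq hl q0 hw.
have mL : 0 < m * L by nra.
have h1 : q / A < q / (4 * m * L).
  apply Rmult_lt_compat_l; first lra.
  apply Rinv_lt_contravar; nra.
have h2 : q / (4 * m * L) * (4 * m * L) = q by field; lra.
have h3 : (q / m) * (ln L / L) >= q / (m * L).
  have -> : (q / m) * (ln L / L) = q / (m * L) * ln L by field; lra.
  have : 0 < q / (m * L) by apply Rdiv_lt_0_compat.
  nra.
have h4 : q / (m * L) = 4 * (q / (4 * m * L)) by field; lra.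
have h5 : 1 <= q / (4 * m * L).
  apply (Rmult_le_reg_r (4 * m * L)); first nra. rewrite h2; lra.
lra.
Qed.


Lemma nat_above (x : R) : exists n : nat, (x <= INR n)%R.
Proof.
have [h1 h2] := archimed (Rmax x 0).
exists (Z.to_nat (up (Rmax x 0))).
rewrite INR_IZR_INZ Znat.Z2Nat.id.
  have := Rmax_l x 0; lra.
apply le_IZR; have := Rmax_r x 0; lra.
Qed.

Close Scope R_scope.
Lemma count_eq (a : nat) : 0 < a ->
  (2 * expn a 2).-1 + ((2 * expn a 2).-1 * (2 * expn a 2).-1.+1).+1 = 4 * (a * a * (a * a)).
Proof.
move=> a0.
have t0 : 0 < 2 * expn a 2 by rewrite muln_gt0 expn_gt0 a0.
rewrite prednK //.
have -> : (2 * expn a 2).-1 + ((2 * expn a 2).-1 * (2 * expn a 2)).+1 = (2 * expn a 2) * (2 * expn a 2).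
  by rewrite addnS -addSn prednK // -[X in X + _]mul1n -mulnDl add1n prednK.
by rewrite !mulnn expnMn.
Qed.

Theorem theorem4 (m : R) (omega : nat -> nat)
  (hm : (0 < m)%R)
  (homega_pos : forall q : nat, (0 < omega q)%N)
  (homega : exists Q0 : nat, forall q : nat, (Q0 <= q)%N ->
     (INR (omega q) >= (INR q / m) * (ln (ln (INR q)) / ln (INR q)))%R) :
  exists Q1 : nat, forall q : nat, (Q1 <= q)%N ->
    exists (n : nat) (e : rel 'I_n),
      undirected e /\ q_solvable q e /\ clique_free e (omega q) /\
      (INR n <= Rpower (INR q) (2 * m + 1))%R.
Proof.
case: homega => Q0 hQ0.
pose K := Rmax (Rmax 3 (1 / (4 * m))) (Rmax (16 * m) (334084 / m)).
have [Q2 hQ2] := nat_above (exp K).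
exists (maxn (maxn Q0 2) Q2) => q hq.
have q0 : (Q0 <= q)%N by apply: leq_trans hq; rewrite !leq_max leqnn.
have q2 : (2 <= q)%N by apply: leq_trans hq; rewrite !leq_max leqnn orbT.
have qQ2 : (Q2 <= q)%N by apply: leq_trans hq; rewrite !leq_max leqnn orbT.
set Rq := INR q.
have Rq2 : (2 <= Rq)%R by rewrite /Rq; apply: (le_INR 2); apply/leP.
have RqK : (exp K <= Rq)%R.
  apply: Rle_trans hQ2 _; apply: le_INR; exact/leP.
set L := ln Rq.
have hLK : (K <= L)%R.
  apply: Rnot_lt_le => h; have := exp_increasing _ _ h.
  rewrite /L exp_ln; lra.
have hK1 := Rmax_l (Rmax 3 (1 / (4 * m))) (Rmax (16 * m) (334084 / m)).
have hK2 := Rmax_r (Rmax 3 (1 / (4 * m))) (Rmax (16 * m) (334084 / m)).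
have L3 : (3 <= L)%R by have := Rmax_l 3 (1 / (4 * m)); rewrite -/K in hK1; lra.
have L4 : (1 <= 4 * m * L)%R.
  have : (1 / (4 * m) <= L)%R by have := Rmax_r 3 (1 / (4 * m)); rewrite -/K in hK1; lra.
  move=> h; have := Rmult_le_compat_l (4 * m) _ _ ltac:(lra) h.
  have -> : (4 * m * (1 / (4 * m)) = 1)%R by field; lra.
  lra.
have L16 : (16 * m <= L)%R by have := Rmax_l (16 * m) (334084 / m); rewrite -/K in hK2; lra.
have Lbig : (334084 <= m * L)%R.
  have : (334084 / m <= L)%R by have := Rmax_r (16 * m) (334084 / m); rewrite -/K in hK2; lra.
  move=> h; have := Rmult_le_compat_l m _ _ ltac:(lra) h.
  have -> : (m * (334084 / m) = 334084)%R by field; lra.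
  lra.
have lnL : (1 <= ln L)%R.
  apply: Rnot_lt_le => h; have := exp_increasing _ _ h.
  rewrite exp_ln; last lra.
  have := exp_le_3; lra.
have L0 : (0 < L)%R by lra.
have hRqL : (Rq = exp L)%R by rewrite /L exp_ln //; lra.
have mLq : (4 * m * L <= Rq)%R.
  have e1 := lin_exp L (1/2) ltac:(lra).
  have e5 : (1 / 2 * L = L / 2)%R by lra.
  rewrite e5 in e1.
  have e2 := exp_gt_id (L / 2).
  have e3 : (exp L = exp (L / 2) * exp (L / 2))%R by rewrite -exp_plus; f_equal; lra.
  have e6 : (exp (L / 2) / (1 / 2) = 2 * exp (L / 2))%R by field.
  rewrite e6 in e1.
  rewrite hRqL e3; nra.
pose a := Z.to_nat (up (4 * m * L)).
have [ha1 ha2] := archimed (4 * m * L).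
have Ra : (INR a = IZR (up (4 * m * L)))%R.
  rewrite /a INR_IZR_INZ Znat.Z2Nat.id //; apply le_IZR; lra.
have a1 : (1 < a)%N.
  apply/ltP; apply: INR_lt; rewrite Ra /=; lra.
have a0 : (0 < a)%N by apply: ltnW.
set r := (q %/ a)%N.
have hqr : (q <= r.+1 * a)%N by apply: ltnW; exact: ltn_ceil.
have hra : (r * a <= q)%N by exact: leq_trunc_div.
have Rr : (INR r <= Rq / INR a)%R.
  have hRa : (0 < INR a)%R by rewrite Ra; lra.
  apply (Rmult_le_reg_r (INR a)) => //.
  have -> : (Rq / INR a * INR a = Rq)%R by field; lra.
  rewrite -mult_INR multE; apply: le_INR; exact/leP.
have hk : (2 * r.+1 < omega q)%N.
  apply/ltP; apply: INR_lt.
  rewrite -multE mult_INR S_INR.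
  have := key_clique m L Rq (INR a) (INR (omega q)) hm L0 ltac:(rewrite Ra; lra) mLq lnL
    ltac:(lra) (hQ0 q q0).
  have h2 : INR 2 = 2%R by simpl; lra.
  rewrite (S_INR r) INR_1; lra.
have [n [e [U [S [C hn]]]]] := finite_part a1 ltac:(apply: ltnW; exact: q2) hqr hk.
exists n, e; split => //; split => //; split => //.
rewrite hn count_eq //.
have hrq : (r.+1 <= q)%N.
  case: (posnP r) => [-> | rp]; first exact: ltnW.
  apply: leq_trans hra; apply: (@leq_trans (r * 2)); last by rewrite leq_mul2l a1 orbT.
  by rewrite muln2 -addnn -addn1 leq_add2l.
rewrite -!multE !mult_INR.
have h4 := key_vertex m L (INR a) hm L0 Lbig ltac:(split; [apply pos_INR | rewrite Ra; lra]).
have hRr : (INR r.+1 <= Rq)%R by apply: le_INR; exact/leP.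
rewrite /Rpower.
have -> : ((2 * m + 1) * ln Rq = 2 * m * L + L)%R by rewrite /L; lra.
rewrite exp_plus -hRqL.
have ha : (0 <= INR a)%R by apply: pos_INR.
have h4' : (4 * (INR a * INR a * (INR a * INR a)) <= exp (2 * m * L))%R.
  have -> : (INR a * INR a * (INR a * INR a) = INR a ^ 4)%R by simpl; ring.
  exact: h4.
have -> : INR 4 = 4%R by simpl; ring.
rewrite Rmult_comm.
apply: Rmult_le_compat => //.
- have : (0 <= INR a * INR a)%R by apply: Rmult_le_pos.
  move=> h; have := Rmult_le_pos _ _ h h; lra.
- exact: pos_INR.
Qed.
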